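(* Let $n$ be even and $1\le\kappa<n$. Let $\mathcal{C}_1\subseteq\{0,1\}^n$ be the set of all balanced binary sequences of length $n$ (so $|\mathcal{C}_1|=\binom{n}{n/2}$) and let $\mathcal{C}_2\subseteq\{0,1\}^n$ be a $\kappa$-WMU code. Let $\mathcal{C}=\{\Psi(\mathbf{a},\mathbf{b}):\mathbf{a}\in\mathcal{C}_1,\mathbf{b}\in\mathcal{C}_2\}\subseteq\{\mathtt{A},\mathtt{T},\mathtt{C},\mathtt{G}\}^n$. Then $\mathcal{C}$ is a $\kappa$-WMU code and $\mathcal{C}$ is balanced.
   Context: $\Psi(\mathbf{a},\mathbf{b})=(c_1,\dots,c_n)$ with $c_i=\mathtt{A},\mathtt{T},\mathtt{C},\mathtt{G}$ according as $(a_i,b_i)=(0,0),(0,1),(1,0),(1,1)$. A binary sequence of length $n$ is balanced if exactly $n/2$ entries are $1$; a DNA sequence of length $n$ is balanced if exactly $n/2$ entries lie in $\{\mathtt{G},\mathtt{C}\}$; a code is balanced if every codeword is. A code $\mathcal{C}$ of length $n$ over an alphabet is $\kappa$-WMU if for all not necessarily distinct $\mathbf{a},\mathbf{b}\in\mathcal{C}$ and all $\kappa\le l<n$, $(a_1,\dots,a_l)\ne(b_{n-l+1},\dots,b_n)$. *)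

(* Defs.v *)
From HB Require Import structures.
From mathcomp Require Import all_boot.
Set Implicit Arguments. Unset Strict Implicit. Unset Printing Implicit Defensive.

Inductive nucleotide := nA | nT | nC | nG.

Definition nuc_to (x : nucleotide) : 'I_4 :=
  match x with nA => inord 0 | nT => inord 1 | nC => inord 2 | nG => inord 3 end.
Definition nuc_of (i : 'I_4) : nucleotide :=
  match val i with 0 => nA | 1 => nT | 2 => nC | _ => nG end.
Lemma nuc_toK : cancel nuc_to nuc_of.
Proof. by case; rewrite /nuc_of /= inordK. Qed.
HB.instance Definition _ := Finite.copy nucleotide (can_type nuc_toK).

Definition psi1 (a b : bool) : nucleotide :=
  match a, b with
  | false, false => nA | false, true => nT | true, false => nC | true, true => nG
  end.

Definition Psi n (a b : n.-tuple bool) : n.-tuple nucleotide :=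
  [tuple psi1 (tnth a i) (tnth b i) | i < n].

Definition balanced_bin n (a : n.-tuple bool) : bool :=
  count id a == n./2.

Definition balanced_dna n (c : n.-tuple nucleotide) : bool :=
  count (fun x => (x == nG) || (x == nC)) c == n./2.

Definition balanced_code n (C : {set n.-tuple nucleotide}) : Prop :=
  forall c, c \in C -> balanced_dna c.

Definition WMU (T : finType) n (kappa : nat) (C : {set n.-tuple T}) : Prop :=
  forall a b, a \in C -> b \in C -> forall l, kappa <= l < n ->
    take l (tval a) != drop (n - l) (tval b).

Definition C1 n : {set n.-tuple bool} := [set a | balanced_bin a].

Definition PsiCode n (A B : {set n.-tuple bool}) : {set n.-tuple nucleotide} :=
  [set Psi a b | a in A, b in B].

(* Main.v *)
Require Import Defs.
From mathcomp Require Import all_boot.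

Definition sndb (x : nucleotide) : bool := match x with nT | nG => true | _ => false end.
Definition fstb (x : nucleotide) : bool := match x with nC | nG => true | _ => false end.

Lemma map_snd_Psi n (a b : n.-tuple bool) : map sndb (tval (Psi a b)) = tval b.
Proof.
rewrite /Psi /= -map_comp -[RHS](map_tnth_enum b); apply: eq_map => i /=. idtac.
by case: (tnth a i); case: (tnth b i).
Qed.

Lemma map_fst_Psi n (a b : n.-tuple bool) : map fstb (tval (Psi a b)) = tval a.
Proof.
rewrite /Psi /= -map_comp -[RHS](map_tnth_enum a); apply: eq_map => i /=.
by case: (tnth a i); case: (tnth b i).
Qed.

Lemma fstbE : forall x : nucleotide, (x == nG) || (x == nC) = fstb x.
Proof. case; rewrite /=; repeat (first [rewrite eqxx | rewrite (_ : (_ == _) = false); last by apply/negbTE/eqP]); by []. Qed.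

Theorem lemma4 (n kappa : nat) (C2 : {set n.-tuple bool}) :
  ~~ odd n -> 1 <= kappa < n -> WMU kappa C2 ->
  WMU kappa (PsiCode (C1 n) C2) /\ balanced_code (PsiCode (C1 n) C2).
Proof.
move=> _ _ hW; split.
  move=> x y /imset2P [a b _ hb ->] /imset2P [a' b' _ hb' ->] l hl.
  apply/negP => /eqP E.
  have := hW b b' hb hb' l hl; rewrite -(@map_snd_Psi _ a b) -(@map_snd_Psi _ a' b').
  by rewrite -map_take -map_drop E eqxx.
move=> x /imset2P [a b ha _ ->].
rewrite /balanced_dna (eq_count (a2:=fstb)); last exact: fstbE.
rewrite -(count_map fstb id) map_fst_Psi.
by move: ha; rewrite inE.
Qed.
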